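(* Let $m,p,q\in(0,\infty)$, let $(u,v)$ be an admissible pair of weights with respect to $(m,p)$, let $w$ be a weight and $C>0$. Then the inequality \[ \left(\int_0^\infty w(t)(f^*(t))^q\,dt\right)^{\frac1q}\le C\left(\int_0^\infty v(t)\left(\int_t^\infty u(s)(f^*(s))^m ds\right)^{\frac pm}dt\right)^{\frac1p} \] holds for all $f\in\mathscr M$ if and only if the inequality \[ \left(\int_0^\infty w(t)(f^*(t))^{\frac qm}\,dt\right)^{\frac mq}\le C^m\left(\int_0^\infty v(t)\left(\int_t^\infty u(s)f^*(s)\,ds\right)^{\frac pm}dt\right)^{\frac mp} \] holds for all $f\in\mathscr M$.
   Context: $\mathscr M$ is the set of real-valued Lebesgue measurable functions on $\mathbb{R}^n$; for $f\in\mathscr M$, $f^*(t):=\inf\{s\ge0:\ |\{x\in\mathbb{R}^n: |f(x)|>s\}|\le t\}$, $t>0$. A weight is a nonnegative measurable function on $(0,\infty)$. For a weight $u$, $U(s,t):=\int_s^t u$; $(u,v)$ is admissible with respect to $(m,p)$ if $0<\left(\int_0^t v(s)U(s,t)^{p/m}ds\right)^{1/p}<\infty$ for all $t\in(0,\infty)$. *)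

(* Defs.v *)
From HB Require Import structures.
From mathcomp Require Import all_boot all_order all_algebra.
From mathcomp Require Import all_classical all_reals all_analysis.
Set Implicit Arguments.
Unset Strict Implicit.
Unset Printing Implicit Defensive.
Import Order.TTheory GRing.Theory Num.Theory.
Local Open Scope classical_set_scope.
Local Open Scope ring_scope.

(* R^n is represented by n.-tuple R; coordinate i of x is tnth x i. *)

Definition box (R : realType) (n : nat) (a b : n.-tuple R) : set (n.-tuple R) :=
  [set x | forall i : 'I_n, tnth a i <= tnth x i <= tnth b i]%R.

Definition box_vol (R : realType) (n : nat) (a b : n.-tuple R) : R :=
  \prod_(i < n) Num.max (tnth b i - tnth a i) 0.

Definition leb_outer (R : realType) (n : nat) (A : set (n.-tuple R)) : \bar R :=
  ereal_inf [set S : \bar R | exists a b : nat -> n.-tuple R,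
     A `<=` \bigcup_k box (a k) (b k) /\
     S = (\sum_(0 <= k <oo) (box_vol (a k) (b k))%:E)%E].

Definition leb_measurable (R : realType) (n : nat) (A : set (n.-tuple R)) : Prop :=
  forall E : set (n.-tuple R),
    leb_outer E = (leb_outer (E `&` A) + leb_outer (E `&` ~` A))%E.

Definition leb_measurable_fun (R : realType) (n : nat) (f : n.-tuple R -> R) : Prop :=
  forall a : R, leb_measurable [set x | a < f x].

Definition distribution_fun (R : realType) (n : nat) (f : n.-tuple R -> R) (s : R)
  : \bar R := leb_outer [set x | s < `|f x|].

(* Nonincreasing rearrangement f^*(t) = inf{s >= 0 : |{|f|>s}| <= t}
   (with inf of the empty set = +oo). *)
Definition rearrangement (R : realType) (n : nat) (f : n.-tuple R -> R) (t : R)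
  : \bar R :=
  ereal_inf [set (s%:E)%E | s in [set s : R | 0 <= s /\
                                 (distribution_fun f s <= t%:E)%E]].

Definition ioo (R : realType) (s t : R) : set R := `]s, t[%classic.
Definition ioinf (R : realType) (s : R) : set R := `]s, +oo[%classic.

Definition weight (R : realType) (u : R -> R) : Prop :=
  measurable_fun (ioinf (0:R)) u /\ (forall t : R, 0 < t -> 0 <= u t).

Definition Uint (R : realType) (u : R -> R) (s t : R) : \bar R :=
  (\int[@lebesgue_measure R]_(x in ioo s t) (u x)%:E)%E.

Definition admissible (R : realType) (u v : R -> R) (m p : R) : Prop :=
  forall t : R, 0 < t ->
    let I := ((\int[@lebesgue_measure R]_(s in ioo 0 t) ((v s)%:E * (Uint u s t) `^ (p / m)))
               `^ p^-1)%E in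
    (0 < I)%E /\ (I < +oo)%E.

(* Main.v *)
Require Import Defs.
From HB Require Import structures.
From mathcomp Require Import all_boot all_order all_algebra.
From mathcomp Require Import all_classical all_reals all_analysis.
From mathcomp Require Import lra.
Import Order.TTheory GRing.Theory Num.Theory.
Local Open Scope classical_set_scope.
Local Open Scope ring_scope.

Section Aux.
Context {R : realType}.

Definition pw (r y : R) : R := if 0 <= y then y `^ r else - ((- y) `^ r).

Lemma pw_nneg r y : 0 <= y -> pw r y = y `^ r.
Proof. by move=> y0; rewrite /pw y0. Qed.

Lemma pw_abs r y : `|pw r y| = `|y| `^ r.
Proof.
rewrite /pw; case: ifPn => y0.
  by rewrite ger0_norm ?powR_ge0 // ger0_norm.
by rewrite normrN ger0_norm ?powR_ge0 // ler0_norm // ltW // ltNge.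
Qed.

Lemma pw_inv r y : 0 < r -> pw r (pw r^-1 y) = y.
Proof.
move=> r0; rewrite /pw; case: (ifPn (0 <= y)) => y0.
  by rewrite powR_ge0 -powRrM mulVf ?gt_eqF // powRr1.
have ny0 : 0 < - y by rewrite oppr_gt0 ltNge.
have h : 0 < (- y) `^ r^-1 by apply: powR_gt0.
rewrite oppr_ge0 leNgt h /= opprK -powRrM mulVf ?gt_eqF // powRr1 ?opprK //.
exact: ltW.
Qed.

Lemma pw_lt r x y : 0 < r -> x < y -> pw r x < pw r y.
Proof.
move=> r0 xy; rewrite /pw.
case: (ifPn (0 <= x)) => x0; case: (ifPn (0 <= y)) => y0.
- by apply: gt0_ltr_powR.
- by move: y0; rewrite (le_trans x0 (ltW xy)).
- apply: (lt_le_trans _ (powR_ge0 _ _)).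
  by rewrite oppr_lt0 powR_gt0 // oppr_gt0 ltNge.
- rewrite ltrN2; apply: gt0_ltr_powR => //; rewrite ?nnegrE ?ltrN2 //.
  + by rewrite oppr_ge0 ltW // ltNge.
  + by rewrite oppr_ge0 ltW // ltNge.
Qed.

Lemma pw_ltE r a y : 0 < r -> (a < pw r y) = (pw r^-1 a < y).
Proof.
move=> r0; apply/idP/idP => h.
  rewrite ltNge; apply/negP => yle.
  move: yle; rewrite le_eqVlt => /orP[/eqP e|lt].
    by move: h; rewrite e pw_inv // ltxx.
  by move: (pw_lt _ _ _ r0 lt); rewrite pw_inv // => /(lt_trans h); rewrite ltxx.
by rewrite -{1}(pw_inv _ a r0); apply: pw_lt.
Qed.

End Aux.
Section Aux2.
Context {R : realType} {n : nat}.

Lemma pw_meas (r : R) (f : n.-tuple R -> R) : 0 < r ->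
  leb_measurable_fun f -> leb_measurable_fun (fun x => pw r (f x)).
Proof.
move=> r0 hf a.
have -> : [set x | a < pw r (f x)] = [set x | pw r^-1 a < f x].
  by apply/funext => x /=; rewrite pw_ltE.
exact: hf.
Qed.

Lemma pw_dist (r : R) (f : n.-tuple R -> R) s : 0 < r -> 0 <= s ->
  distribution_fun (fun x => pw r (f x)) s = distribution_fun f (s `^ r^-1).
Proof.
move=> r0 s0; rewrite /distribution_fun.
congr leb_outer; apply/funext => x /=.
by rewrite pw_abs -pw_nneg // pw_ltE // pw_nneg.
Qed.

Lemma rearr_ge0 (f : n.-tuple R -> R) t : (0 <= rearrangement f t)%E.
Proof.
apply: le_ereal_inf_tmp => _ [s [s0 _] <-]; by rewrite lee_fin.
Qed.

Local Open Scope ereal_scope.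

Lemma poweR_le (x y : \bar R) (r : R) : (0 <= r)%R -> 0 <= x -> x <= y ->
  x `^ r <= y `^ r.
Proof.
move=> r0 x0 xy; apply: gt0_ler_poweR => //; rewrite in_itv /= ?leey ?x0 //.
by rewrite (le_trans x0 xy).
Qed.

Lemma poweR_inv (x : \bar R) (r : R) : (0 < r)%R -> 0 <= x ->
  (x `^ r) `^ r^-1 = x.
Proof. by move=> r0 x0; rewrite -poweRrM mulfV ?gt_eqF // poweRe1. Qed.

Lemma rearr_pw (r : R) (f : n.-tuple R -> R) t : (0 < r)%R ->
  rearrangement (fun x => pw r (f x)) t = (rearrangement f t) `^ r.
Proof.
move=> r0; have ri0 : (0 < r^-1)%R by rewrite invr_gt0.
have hg := rearr_ge0 (fun x => pw r (f x)) t.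
have hf := rearr_ge0 f t.
apply/eqP; rewrite eq_le; apply/andP; split.
- rewrite -[X in X <= _](poweR_inv _ _ ri0 hg) invrK.
  apply: poweR_le; [exact: ltW|exact: poweR_ge0|].
  apply: le_ereal_inf_tmp => _ [s [s0 hs] <-].
  have s0' : 0 <= s%:E by rewrite lee_fin.
  rewrite -(poweR_inv _ _ r0 s0').
  apply: poweR_le; [exact: ltW|exact: hg|].
  apply: ereal_inf_lbound; exists (s `^ r)%R => //; split.
    exact: powR_ge0.
  by rewrite pw_dist ?powR_ge0 // -powRrM mulfV ?gt_eqF // powRr1.
- apply: le_ereal_inf_tmp => _ [s [s0 hs] <-].
  have s1 : (0 <= s `^ r^-1)%R by apply: powR_ge0.
  have -> : s%:E = (s `^ r^-1)%:E `^ r.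
    by rewrite poweR_EFin -powRrM mulVf ?gt_eqF // powRr1.
  apply: poweR_le; [exact: ltW|exact: hf|].
  apply: ereal_inf_lbound; exists (s `^ r^-1)%R => //; split => //.
  by rewrite -pw_dist.
Qed.
End Aux2.
Section Aux3.
Context {R : realType}.
Local Open Scope ereal_scope.

Lemma pow_fwd (A B : \bar R) (C m p q : R) : (0 < m)%R -> (0 < C)%R ->
  A `^ q^-1 <= C%:E * B `^ p^-1 -> A `^ (m / q) <= (C `^ m)%:E * B `^ (m / p).
Proof.
move=> m0 C0 H.
have C0' : 0 <= C%:E by rewrite lee_fin ltW.
move: (poweR_le _ _ _ (ltW m0) (poweR_ge0 _ _) H).
rewrite -poweRrM (poweRM _ C0' (poweR_ge0 _ _)) -poweRrM poweR_EFin.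
by rewrite [(m / q)%R]mulrC [(m / p)%R]mulrC.
Qed.

Lemma pow_bwd (A B : \bar R) (C m p q : R) : (0 < m)%R -> (0 < C)%R ->
  A `^ (m / q) <= (C `^ m)%:E * B `^ (m / p) -> A `^ q^-1 <= C%:E * B `^ p^-1.
Proof.
move=> m0 C0 H.
have mi0 : (0 <= m^-1)%R by rewrite invr_ge0 ltW.
have C0' : 0 <= (C `^ m)%:E by rewrite lee_fin powR_ge0.
move: (poweR_le _ _ _ mi0 (poweR_ge0 _ _) H).
rewrite -poweRrM (poweRM _ C0' (poweR_ge0 _ _)) -poweRrM poweR_EFin.
rewrite -powRrM mulfV ?gt_eqF // (powRr1 (ltW C0)).
have e : forall x : R, (m / x * m^-1 = x^-1)%R.
  by move=> x; rewrite mulrAC mulfV ?gt_eqF // mul1r.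
by rewrite !e.
Qed.
End Aux3.
Theorem proposition3p10 (R : realType) (n : nat) (m p q : R)
  (u v w : R -> R) (C : R) :
  (0 < n)%N -> 0 < m -> 0 < p -> 0 < q ->
  weight u -> weight v -> admissible u v m p -> weight w -> 0 < C ->
  ((forall f : n.-tuple R -> R, leb_measurable_fun f ->
     ((\int[@lebesgue_measure R]_(t in ioinf 0)
          ((w t)%:E * ((rearrangement f t) `^ q))) `^ q^-1
      <= C%:E *
         (\int[@lebesgue_measure R]_(t in ioinf 0)
            ((v t)%:E *
             ((\int[@lebesgue_measure R]_(s in ioinf t)
                 ((u s)%:E * ((rearrangement f s) `^ m))) `^ (p / m)))) `^ p^-1)%E)
   <->
   (forall f : n.-tuple R -> R, leb_measurable_fun f ->
     ((\int[@lebesgue_measure R]_(t in ioinf 0)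
          ((w t)%:E * ((rearrangement f t) `^ (q / m)))) `^ (m / q)
      <= (C `^ m)%:E *
         (\int[@lebesgue_measure R]_(t in ioinf 0)
            ((v t)%:E *
             ((\int[@lebesgue_measure R]_(s in ioinf t)
                 ((u s)%:E * rearrangement f s)) `^ (p / m)))) `^ (m / p))%E)).
Proof.
move=> _ m0 p0 q0 _ _ _ _ C0.
have mi0 : 0 < m^-1 by rewrite invr_gt0.
split.
- move=> H1 g hg.
  move: (H1 _ (pw_meas _ _ mi0 hg)).
  set f := (fun x => pw m^-1 (g x)).
  have e1 : (fun t => (w t)%:E * (rearrangement f t) `^ q)%E =
            (fun t => (w t)%:E * (rearrangement g t) `^ (q / m))%E.
    by apply/funext => t; rewrite /f rearr_pw // -poweRrM mulrC.
  have e2 : (fun s => (u s)%:E * (rearrangement f s) `^ m)%E =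
            (fun s => (u s)%:E * (rearrangement g s))%E.
    apply/funext => s; rewrite /f rearr_pw // -poweRrM mulVf ?gt_eqF //.
    by rewrite poweRe1 // rearr_ge0.
  rewrite e1 e2; exact: pow_fwd.
- move=> H2 f hf.
  move: (H2 _ (pw_meas _ _ m0 hf)).
  set g := (fun x => pw m (f x)).
  have e1 : (fun t => (w t)%:E * (rearrangement g t) `^ (q / m))%E =
            (fun t => (w t)%:E * (rearrangement f t) `^ q)%E.
    by apply/funext => t; rewrite /g rearr_pw // -poweRrM (mulrC m) divfK ?gt_eqF.
  have e2 : (fun s => (u s)%:E * (rearrangement g s))%E =
            (fun s => (u s)%:E * (rearrangement f s) `^ m)%E.
    by apply/funext => s; rewrite /g rearr_pw.
  rewrite e1 e2; exact: pow_bwd.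
Qed.
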